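(* For every $J$-unitary $T$ on ${\cal K}$, $$V(T)^{-1}=V(T)^*=V(T^{-1})=J\,V(T^* )\,J.$$
   Context: ${\cal H}$ is a separable complex Hilbert space, ${\cal K}={\cal H}\oplus{\cal H}$, $J=\begin{pmatrix}{\bf 1}&0\\0&-{\bf 1}\end{pmatrix}$. A bounded invertible $T$ on ${\cal K}$ is $J$-unitary if $T^*JT=J$; then $T^*$ and $T^{-1}$ are $J$-unitary, and writing $T=\begin{pmatrix}a&b\\c&d\end{pmatrix}$ the blocks $a,d$ are invertible. Define the unitary $V(T)=\begin{pmatrix}(a^* )^{-1}&bd^{-1}\\-d^{-1}c&d^{-1}\end{pmatrix}$. *)

(* Defs.v *)
From HB Require Import structures.
From mathcomp Require Import all_boot all_order all_algebra.
From mathcomp Require Import reals.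
From mathcomp Require Import complex.
From Stdlib Require Import ClassicalEpsilon.
Set Implicit Arguments. Unset Strict Implicit. Unset Printing Implicit Defensive.
Import Order.TTheory GRing.Theory Num.Theory.
Local Open Scope ring_scope.

Section Hilbert.
Variable R : realType.
Local Notation C := (R[i]).

Section IP.
Variable V : lmodType C.
Variable ip : V -> V -> C.

Definition hnorm (x : V) : R := Num.sqrt (complex.Re (ip x x)).

Definition is_inner_product : Prop :=
  [/\ forall (a : C) (x y z : V), ip (a *: x + y) z = a * ip x z + ip y z,
      forall x y : V, ip y x = conjc (ip x y),
      forall x : V, 0 <= ip x x &
      forall x : V, ip x x = 0 -> x = 0].

Definition is_complete : Prop :=
  forall u : nat -> V,
    (forall e : R, 0 < e -> exists N : nat, forall m n, (N <= m)%N -> (N <= n)%N ->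
         hnorm (u m - u n) < e) ->
    exists l : V, forall e : R, 0 < e -> exists N : nat, forall n, (N <= n)%N ->
         hnorm (u n - l) < e.

Definition is_separable : Prop :=
  exists s : nat -> V, forall (x : V) (e : R), 0 < e -> exists n, hnorm (x - s n) < e.

Definition is_sep_hilbert : Prop :=
  [/\ is_inner_product, is_complete & is_separable].

Definition bounded_op (T : V -> V) : Prop :=
  (forall (a : C) (x y : V), T (a *: x + y) = a *: T x + T y) /\
  exists M : R, forall x, hnorm (T x) <= M * hnorm x.

Definition bounded_invertible (T : V -> V) : Prop :=
  bounded_op T /\ exists S, [/\ bounded_op S, cancel T S & cancel S T].

(* the adjoint T^* : the operator S with <T x, y> = <x, S y> for all x, y
   (it exists and is unique for bounded T on a Hilbert space) *)
Definition adj (T : V -> V) : V -> V :=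
  epsilon (inhabits id) (fun S : V -> V => forall x y, ip (T x) y = ip x (S y)).

End IP.

Definition opinv {V : Type} (T : V -> V) : V -> V :=
  epsilon (inhabits id) (fun S : V -> V => cancel T S /\ cancel S T).

Section K.
Variable H : lmodType C.
Variable ip : H -> H -> C.

Definition ipK (u v : (H * H)%type) : C := ip u.1 v.1 + ip u.2 v.2.

Definition Jop (u : (H * H)%type) : (H * H)%type := (u.1, - u.2).

Definition J_unitary (T : (H * H)%type -> (H * H)%type) : Prop :=
  bounded_invertible ipK T /\ adj ipK T \o Jop \o T = Jop.

(* blocks of T = [[a, b], [c, d]] *)
Definition blk_a (T : (H * H)%type -> (H * H)%type) (x : H) : H := (T (x, 0)).1.
Definition blk_b (T : (H * H)%type -> (H * H)%type) (y : H) : H := (T (0, y)).1.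
Definition blk_c (T : (H * H)%type -> (H * H)%type) (x : H) : H := (T (x, 0)).2.
Definition blk_d (T : (H * H)%type -> (H * H)%type) (y : H) : H := (T (0, y)).2.

Definition Vop (T : (H * H)%type -> (H * H)%type) (u : (H * H)%type) : (H * H)%type :=
  (opinv (adj ip (blk_a T)) u.1 + blk_b T (opinv (blk_d T) u.2),
   - opinv (blk_d T) (blk_c T u.1) + opinv (blk_d T) u.2).

End K.
End Hilbert.
Arguments Jop {R H} u.

(* Main.v *)
Require Import Defs.
From HB Require Import structures.
From mathcomp Require Import all_boot all_order all_algebra.
From mathcomp Require Import reals.
From mathcomp Require Import complex.
From mathcomp Require Import ring lra.
From Stdlib Require Import ClassicalEpsilon.
Set Implicit Arguments. Unset Strict Implicit. Unset Printing Implicit Defensive.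
Import Order.TTheory GRing.Theory Num.Theory.
Local Open Scope ring_scope.
Local Open Scope complex_scope.

Section Cx.
Variable R : realType.
Local Notation C := (R[i]).

Definition n2 (w : C) : R := complex.Re (w * conjc w).

Lemma n2E (w : C) : n2 w = complex.Re w ^+ 2 + complex.Im w ^+ 2.
Proof. by case: w => a b; rewrite /n2 /=; ring. Qed.

Lemma n2_ge0 w : 0 <= n2 w.
Proof. rewrite n2E; apply: addr_ge0; exact: sqr_ge0. Qed.

Lemma mulcJ (w : C) : w * conjc w = (n2 w)%:C.
Proof. case: w => a b; rewrite /n2 /=; apply/eqP; rewrite eq_complex /=; apply/andP; split; apply/eqP; ring. Qed.

Lemma n2_eq0 w : n2 w = 0 -> w = 0.
Proof.
rewrite n2E; case: w => a b /= h.
have ha : a ^+ 2 = 0 by have := sqr_ge0 a; have := sqr_ge0 b; lra.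
have hb : b ^+ 2 = 0 by have := sqr_ge0 a; have := sqr_ge0 b; lra.
move/eqP: ha; rewrite sqrf_eq0 => /eqP ->; move/eqP: hb; rewrite sqrf_eq0 => /eqP -> //.
Qed.

Lemma n2M a b : n2 (a * b) = n2 a * n2 b.
Proof. case: a => a1 a2; case: b => b1 b2; rewrite !n2E /=; ring. Qed.

Lemma n2J a : n2 (conjc a) = n2 a.
Proof. case: a => a1 a2; rewrite !n2E /=; ring. Qed.

Lemma n2N a : n2 (- a) = n2 a.
Proof. case: a => a1 a2; rewrite !n2E /=; ring. Qed.

Lemma n2R (s : R) : n2 s%:C = s ^+ 2.
Proof. rewrite n2E /=; ring. Qed.

Lemma n2D a b : n2 (a + b) <= 2 * n2 a + 2 * n2 b.
Proof. case: a => a1 a2; case: b => b1 b2; rewrite !n2E /=.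
have := sqr_ge0 (a1 - b1); have := sqr_ge0 (a2 - b2).
rewrite !sqrrB !sqrrD; lra. Qed.

Lemma ReM_le a : complex.Re a ^+ 2 <= n2 a.
Proof. rewrite n2E; have := sqr_ge0 (complex.Im a); lra. Qed.

Lemma cjD (a b : C) : conjc (a + b) = conjc a + conjc b.
Proof. by case: a => a1 a2; case: b => b1 b2 /=; rewrite opprD. Qed.
Lemma cjM (a b : C) : conjc (a * b) = conjc a * conjc b.
Proof. case: a => a1 a2; case: b => b1 b2 /=; apply/eqP; rewrite eq_complex /=; apply/andP; split; apply/eqP; ring. Qed.
Lemma cjN (a : C) : conjc (- a) = - conjc a.
Proof. by case: a. Qed.
Lemma cjR (s : R) : conjc (s%:C) = s%:C.
Proof. by rewrite /= oppr0. Qed.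
Lemma cj1 : conjc (1 : C) = 1.
Proof. by rewrite /= oppr0. Qed.
Lemma cj0 : conjc (0 : C) = 0.
Proof. by rewrite /= oppr0. Qed.
Lemma cjK (a : C) : conjc (conjc a) = a.
Proof. by case: a => a1 a2 /=; rewrite opprK. Qed.
Lemma RcD (a b : R) : (a + b)%:C = a%:C + b%:C :> C.
Proof. apply/eqP; rewrite eq_complex /=; apply/andP; split; apply/eqP; ring. Qed.
Lemma RcM (a b : R) : (a * b)%:C = a%:C * b%:C :> C.
Proof. apply/eqP; rewrite eq_complex /=; apply/andP; split; apply/eqP; ring. Qed.
Lemma RcN (a : R) : (- a)%:C = - a%:C :> C.
Proof. apply/eqP; rewrite eq_complex /=; apply/andP; split; apply/eqP; ring. Qed.

End Cx.

Section IPB.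
Variable R : realType.
Local Notation C := (R[i]).
Variable H : lmodType C.
Variable ip : H -> H -> C.
Hypothesis hip : is_inner_product ip.

Let hlin : forall (a : C) (x y z : H), ip (a *: x + y) z = a * ip x z + ip y z.
Proof. by case: hip. Qed.
Lemma ipC x y : ip y x = conjc (ip x y).
Proof. by case: hip. Qed.

Lemma ip0l z : ip 0 z = 0.
Proof.
have := hlin 1 0 0 z; rewrite scaler0 addr0 mul1r => e.
have : ip 0 z + ip 0 z - ip 0 z = ip 0 z - ip 0 z by rewrite -e.
by rewrite addrK subrr.
Qed.
Lemma ipDl x y z : ip (x + y) z = ip x z + ip y z.
Proof. by rewrite -(scale1r x) hlin mul1r scale1r. Qed.
Lemma ipZl a x z : ip (a *: x) z = a * ip x z.
Proof. by rewrite -(addr0 (a *: x)) hlin ip0l addr0. Qed.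
Lemma ipNl x z : ip (- x) z = - ip x z.
Proof. by rewrite -scaleN1r ipZl mulN1r. Qed.
Lemma ipBl x y z : ip (x - y) z = ip x z - ip y z.
Proof. by rewrite ipDl ipNl. Qed.
Lemma ipDr x y z : ip z (x + y) = ip z x + ip z y.
Proof. by rewrite ipC ipDl cjD -!ipC. Qed.
Lemma ipZr a x z : ip z (a *: x) = conjc a * ip z x.
Proof. by rewrite ipC ipZl cjM -ipC. Qed.
Lemma ip0r z : ip z 0 = 0.
Proof. by rewrite ipC ip0l cj0. Qed.
Lemma ipNr x z : ip z (- x) = - ip z x.
Proof. by rewrite -scaleN1r ipZr cjN cj1 mulN1r. Qed.
Lemma ipBr x y z : ip z (x - y) = ip z x - ip z y.
Proof. by rewrite ipDr ipNr. Qed.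

Definition Q (x : H) : R := complex.Re (ip x x).

Lemma ipQ x : ip x x = (Q x)%:C.
Proof.
case: hip => _ _ h _; have := h x; rewrite lecE /Q.
by case: (ip x x) => a b /= /andP[/eqP -> _].
Qed.
Lemma Q_ge0 x : 0 <= Q x.
Proof. by case: hip => _ _ h _; have := h x; rewrite ipQ lecR. Qed.
Lemma Q_eq0 x : Q x = 0 -> x = 0.
Proof. by case: hip => _ _ _ h e; apply: h; rewrite ipQ e. Qed.
Lemma Q0 : Q 0 = 0.
Proof. by rewrite /Q ip0l. Qed.

Lemma ReJ (w : C) : complex.Re (conjc w) = complex.Re w.
Proof. by case: w. Qed.
Lemma ReD (a b : C) : complex.Re (a + b) = complex.Re a + complex.Re b.
Proof. by case: a; case: b. Qed.
Lemma ReRM (s : R) (a : C) : complex.Re (s%:C * a) = s * complex.Re a.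
Proof. case: a => a1 a2 /=; ring. Qed.

Lemma Q_expand x y t : Q (x + t *: y) = Q x + 2 * complex.Re (t * ip y x) + n2 t * Q y.
Proof.
have e : ip (x + t *: y) (x + t *: y) =
   ip x x + (conjc (t * ip y x) + t * ip y x) + (t * conjc t) * ip y y.
  rewrite ipDl !ipDr !ipZl !ipZr cjM -ipC; ring.
rewrite /Q e !ReD ReJ mulcJ ReRM /=; ring.
Qed.

Lemma Q_line x y (s : R) :
  Q (x + (- (s%:C * conjc (ip y x))) *: y) =
  Q x - 2 * s * n2 (ip y x) + s ^+ 2 * n2 (ip y x) * Q y.
Proof.
rewrite Q_expand n2N n2M n2R n2J.
have -> : (- (s%:C * conjc (ip y x)) * ip y x) = (- s * n2 (ip y x))%:C.
  by rewrite RcM RcN -mulcJ; ring.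
rewrite /=; ring.
Qed.

Lemma CS x y : n2 (ip y x) <= Q x * Q y.
Proof.
have [y0|ny0] := eqVneq (Q y) 0.
  by move/Q_eq0: y0 => ->; rewrite ip0l Q0 mulr0 /n2 mul0r.
have qp : 0 < Q y by rewrite lt_def ny0 Q_ge0.
have := Q_ge0 (x + (- ((Q y)^-1%:C * conjc (ip y x))) *: y).
rewrite Q_line => h.
have e : (Q y)^-1 ^+ 2 * n2 (ip y x) * Q y = (Q y)^-1 * n2 (ip y x).
  by field.
rewrite e in h.
have h2 : (Q y)^-1 * n2 (ip y x) <= Q x by lra.
by rewrite -(ler_pM2r qp) mulrAC mulVf ?mul1r in h2.
Qed.

Lemma ReN (a : C) : complex.Re (- a) = - complex.Re a.
Proof. by case: a. Qed.

Lemma Q_par x y : Q (x + y) + Q (x - y) = 2 * Q x + 2 * Q y.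
Proof.
have n21 : n2 (1 : C) = 1 by rewrite n2E /=; ring.
have := Q_expand x y 1; have := Q_expand x y (-1).
rewrite !scaleN1r !scale1r !mul1r mulN1r n2N n21 ReN => -> ->; ring.
Qed.

Lemma Q_add_le x y : Q (x + y) <= 2 * Q x + 2 * Q y.
Proof. have := Q_par x y; have := Q_ge0 (x - y); lra. Qed.

Lemma QN x : Q (- x) = Q x.
Proof. by rewrite /Q ipNl ipNr opprK. Qed.

Lemma QZ a x : Q (a *: x) = n2 a * Q x.
Proof. by have := Q_expand 0 x a; rewrite add0r Q0 ip0r mulr0 /= mulr0 !add0r. Qed.

End IPB.

Section Min.
Variable R : realType.
Local Notation C := (R[i]).
Variable H : lmodType C.
Variable ip : H -> H -> C.
Hypothesis hip : is_inner_product ip.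
Hypothesis hc : is_complete ip.
Local Notation Q := (Q ip).

Definition convQ (u : nat -> H) l := forall e : R, 0 < e -> exists N, forall n, (N <= n)%N -> Q (u n - l) < e.

Lemma hnorm_lt x (e : R) : 0 < e -> (hnorm ip x < e) = (Q x < e ^+ 2).
Proof.
move=> ep; rewrite /hnorm -[X in _ < X]ger0_norm ?(ltW ep) // -sqrtr_sqr ltr_sqrt //.
exact: exprn_gt0.
Qed.

Lemma complete_Q (u : nat -> H) :
  (forall e : R, 0 < e -> exists N, forall m n, (N <= m)%N -> (N <= n)%N -> Q (u m - u n) < e) ->
  exists l, convQ u l.
Proof.
move=> hu.
have hu' : forall e : R, 0 < e -> exists N : nat, forall m n, (N <= m)%N -> (N <= n)%N ->
         hnorm ip (u m - u n) < e.
  move=> e ep; have [N hN] := hu (e ^+ 2) (exprn_gt0 _ ep).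
  by exists N => m n hm hn; rewrite hnorm_lt // hN.
have [l hl] := hc hu'.
exists l => e ep; have sp : 0 < Num.sqrt e by rewrite sqrtr_gt0.
have [N hN] := hl (Num.sqrt e) sp.
exists N => n hn; have := hN n hn; rewrite hnorm_lt ?sqrtr_gt0 // sqr_sqrtr //; exact: ltW.
Qed.

Definition eps (n : nat) : R := (n.+1%:R)^-1.

Lemma archi_inv (e : R) : 0 < e -> exists N, forall n, (N <= n)%N -> eps n < e.
Proof.
move=> ep; exists (Num.Def.archi_bound e^-1) => n hn.
have hx : 0 <= e^-1 by rewrite invr_ge0 ltW.
have h1 := archi_boundP hx.
have h2 : (Num.Def.archi_bound e^-1)%:R <= n.+1%:R :> R.
  by rewrite ler_nat; apply: leq_trans hn _.
have h3 : e^-1 < n.+1%:R by apply: lt_le_trans h1 h2.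
by rewrite /eps invf_plt // posrE // ltr0Sn.
Qed.


Lemma real_aux (a b r d D eta : R) : 0 < eta -> 0 < D -> 0 <= a -> a <= D -> a <= d + eta / 4 ->
  0 <= b -> b <= eta / 4 -> b * (64 * D) <= eta ^+ 2 -> r ^+ 2 <= a * b ->
  a + 2 * r + b <= d + eta.
Proof.
move=> e0 D0 a0 aD ad b0 be bD rab.
have r2 : r ^+ 2 <= eta ^+ 2 / 64.
  have h1 : a * b <= D * b by apply: ler_wpM2r.
  rewrite ler_pdivlMr //; nra.
have : r <= eta / 8.
  case: (lerP r (eta / 8)) => // hr.
  have : 0 < (r - eta / 8) * (r + eta / 8) by apply: mulr_gt0; lra.
  have -> : (r - eta / 8) * (r + eta / 8) = r ^+ 2 - eta ^+ 2 / 64 by field.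
  lra.
lra.
Qed.

Lemma n2_half : n2 (2%:R^-1 : C) = 4%:R^-1.
Proof.
have h2 : n2 (2%:R : C) = 4%:R by rewrite n2E /=; ring.
have : n2 (2%:R : C) * n2 (2%:R^-1 : C) = 1.
  rewrite -n2M mulfV ?pnatr_eq0 // n2E /=; ring.
rewrite h2 => e; apply: (@mulfI _ 4%:R); first by rewrite pnatr_eq0.
by rewrite e mulfV // pnatr_eq0.
Qed.

Lemma min_exists (A : H -> Prop) x0 : A x0 ->
  (forall x y, A x -> A y -> A ((2%:R^-1 : C) *: (x + y))) ->
  (forall u l, (forall n, A (u n)) -> convQ u l -> A l) ->
  exists z, A z /\ forall w, A w -> Q z <= Q w.
Proof.
move=> Ax0 Amid Acl.
pose E : classical_sets.set R := fun r => exists x, A x /\ r = Q x.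
have hlb : classical_sets.has_lbound E.
  by exists 0 => r [x [_ ->]]; exact: Q_ge0.
have hne : classical_sets.nonempty E by exists (Q x0), x0.
have hinf : classical_sets.has_inf E by split.
pose d := inf E.
have dle : forall w, A w -> d <= Q w.
  by move=> w Aw; apply: (ge_inf hlb); exists w.
have d0 : 0 <= d by apply: lb_le_inf => // r [x [_ ->]]; exact: Q_ge0.
have near : forall n : nat, exists x, A x /\ Q x < d + eps n.
  move=> n; have ep : 0 < eps n by rewrite /eps invr_gt0 ltr0Sn.
  have [r [x [Ax ->]] hr] := inf_adherent ep hinf.
  by exists x.
have [u hu] : exists u : nat -> H, forall n, A (u n) /\ Q (u n) < d + eps n.
  exists (fun n => proj1_sig (constructive_indefinite_description _ (near n))) => n.
  exact: proj2_sig (constructive_indefinite_description _ (near n)).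
clearbody d.
have hQu : forall n, Q (u n) <= d + 1.
  move=> n; have [_ h] := hu n; apply: le_trans (ltW h) _; rewrite lerD2l.
  by rewrite /eps invf_le1 ?ltr0Sn // ler1n.
have mid4 : forall x y, Q (x + y) = 4 * Q ((2%:R^-1 : C) *: (x + y)).
  move=> x y; rewrite (QZ hip) n2_half mulrA mulfV ?mul1r // pnatr_eq0 //.
have [l hl] : exists l, convQ u l.
  apply: complete_Q => e ep.
  have e4 : 0 < e / 4 by apply: divr_gt0.
  have [N hN] := archi_inv e4.
  exists N => m n hm hn.
  have := Q_par hip (u m) (u n).
  have := dle _ (Amid _ _ (proj1 (hu m)) (proj1 (hu n))).
  have := mid4 (u m) (u n).
  have := proj2 (hu m); have := proj2 (hu n); have := hN m hm; have := hN n hn.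
  lra.
have Al : A l by apply: (Acl u) => // n; exact: proj1 (hu n).
exists l; split => // w Aw; apply: le_trans (dle _ Aw).
apply/ler_addgt0Pr => eta eta0.
have D0 : 0 < d + 1 by lra.
have e4 : 0 < eta / 4 by apply: divr_gt0.
have e64 : 0 < eta ^+ 2 / (64 * (d + 1)) by apply: divr_gt0; [exact: exprn_gt0| apply: mulr_gt0].
have [N1 hN1] := archi_inv e4.
have [N2 hN2] := hl _ e4.
have [N3 hN3] := hl _ e64.
pose n := (N1 + N2 + N3)%N.
have h1 := hN1 n (leq_trans (leq_addr _ _) (leq_addr _ _)).
have h2 := hN2 n (leq_trans (leq_addl _ _) (leq_addr _ _)).
have h3 := hN3 n (leq_addl _ _).
have := Q_expand hip (u n) (l - u n) 1.
rewrite scale1r addrC subrK mul1r => ->.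
have n21 : n2 (1 : C) = 1 by rewrite n2E /=; ring.
rewrite n21 mul1r.
have hb : Q (l - u n) = Q (u n - l) by rewrite -QN ?opprB.
rewrite hb.
apply: (real_aux (D := d + 1)) => //.
- exact: Q_ge0.
- have := proj2 (hu n); lra.
- exact: Q_ge0.
- exact: ltW.
- rewrite -ler_pdivlMr ?mulr_gt0 //; exact: ltW.
- apply: le_trans (ReM_le _) _.
  by rewrite -hb; exact: (CS hip).
Qed.

End Min.

Lemma zid1 (V : zmodType) (l a b y : V) : l - (b - y) = l - (a - y) + (a - b).
Proof. by rewrite !opprB -addrA (addrA (y - a)) subrK. Qed.
Lemma zid2 (V : zmodType) (a b l y : V) : a - b = (a - y - l) + (l - (b - y)).
Proof. by rewrite addrA subrK opprB addrA subrK. Qed.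

Section Lin.
Variable R : realType.
Local Notation C := (R[i]).
Variables (U V : lmodType C) (g : U -> V).
Hypothesis hg : forall (a : C) x y, g (a *: x + y) = a *: g x + g y.
Lemma lin0 : g 0 = 0.
Proof.
have := hg 1 0 0; rewrite scaler0 addr0 scale1r => e.
have : g 0 + g 0 - g 0 = g 0 - g 0 by rewrite -e.
by rewrite addrK subrr.
Qed.
Lemma linD x y : g (x + y) = g x + g y.
Proof. by have := hg 1 x y; rewrite !scale1r. Qed.
Lemma linZ a x : g (a *: x) = a *: g x.
Proof. by rewrite -(addr0 (a *: x)) hg lin0 addr0. Qed.
Lemma linN x : g (- x) = - g x.
Proof. by rewrite -scaleN1r linZ scaleN1r. Qed.
Lemma linB x y : g (x - y) = g x - g y.
Proof. by rewrite linD linN. Qed.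
End Lin.

Section Flin.
Variable R : realType.
Local Notation C := (R[i]).
Variables (U : lmodType C) (f : U -> C).
Hypothesis hf : forall (a : C) x y, f (a *: x + y) = a * f x + f y.
Lemma flin0 : f 0 = 0.
Proof.
have := hf 1 0 0; rewrite scaler0 addr0 mul1r => e.
have : f 0 + f 0 - f 0 = f 0 - f 0 by rewrite -e.
by rewrite addrK subrr.
Qed.
Lemma flinD x y : f (x + y) = f x + f y.
Proof. by have := hf 1 x y; rewrite scale1r mul1r. Qed.
Lemma flinZ a x : f (a *: x) = a * f x.
Proof. by rewrite -(addr0 (a *: x)) hf flin0 addr0. Qed.
Lemma flinB x y : f (x - y) = f x - f y.
Proof. have := hf (-1) y x; rewrite scaleN1r mulN1r => h. by rewrite [x - y]addrC h addrC. Qed.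
End Flin.

Section Riesz.
Variable R : realType.
Local Notation C := (R[i]).
Variable H : lmodType C.
Variable ip : H -> H -> C.
Hypothesis hip : is_inner_product ip.
Hypothesis hc : is_complete ip.
Local Notation Q := (Q ip).

Lemma variational (A : H -> Prop) z h : A z -> (forall w, A w -> Q z <= Q w) ->
  (forall t : C, A (z + t *: h)) -> ip h z = 0.
Proof.
move=> Az zmin hA.
pose s := (Q h + 1)^-1.
have Qh0 := Q_ge0 hip h.
have s0 : 0 < s by rewrite /s invr_gt0; lra.
have sQ : s * Q h < 1.
  rewrite /s mulrC ltr_pdivrMr; lra.
have := zmin _ (hA (- (s%:C * conjc (ip h z)))).
rewrite Q_line // => hle.
have k0 := n2_ge0 (ip h z).
apply: n2_eq0; apply/eqP; rewrite eq_le k0 andbT.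
have : 0 <= s * n2 (ip h z) * (s * Q h - 2) by rewrite expr2 in hle; nra.
move=> h1.
have : s * n2 (ip h z) * (s * Q h - 2) <= - (s * n2 (ip h z)).
  have : 0 <= s * n2 (ip h z) by apply: mulr_ge0 => //; exact: ltW.
  nra.
move=> h2; have : s * n2 (ip h z) <= 0 by lra.
by rewrite pmulr_rle0.
Qed.

Lemma two_neq0 : (2%:R : C) != 0.
Proof. by rewrite pnatr_eq0. Qed.

Lemma half_twice (y : H) : (2%:R^-1 : C) *: (y + y) = y.
Proof.
have -> : y + y = (2%:R : C) *: y by rewrite mulr2n scalerDl scale1r.
by rewrite scalerA mulVf ?scale1r // two_neq0.
Qed.

Lemma riesz (f : H -> C) : (forall a x y, f (a *: x + y) = a * f x + f y) ->
  (exists M, 0 <= M /\ forall x, n2 (f x) <= M * Q x) -> exists z, forall x, f x = ip x z.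
Proof.
move=> hf [M [M0 hM]].
case: (classic (exists x1, f x1 != 0)); last first.
  move=> nf; exists 0 => x; rewrite (ip0r hip).
  by apply/eqP; apply/negP => /negP fx; apply: nf; exists x.
move=> [x1 fx1].
pose A := fun x => f x = 1.
have Ax0 : A ((f x1)^-1 *: x1) by rewrite /A (flinZ hf) mulVf.
have Amid : forall x y, A x -> A y -> A ((2%:R^-1 : C) *: (x + y)).
  move=> x y; rewrite /A (flinZ hf) (flinD hf) => -> ->.
  have -> : (1 + 1 : C) = 2%:R by rewrite mulr2n.
  by rewrite mulVf // two_neq0.
have Acl : forall u l, (forall n, A (u n)) -> convQ ip u l -> A l.
  move=> u l Au hl; rewrite /A.
  suff : 1 - f l = 0 by move/eqP; rewrite subr_eq0 => /eqP <-.
  apply: n2_eq0; apply/eqP; rewrite eq_le n2_ge0 andbT.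
  rewrite leNgt; apply/negP => wpos.
  have ep : 0 < n2 (1 - f l) / (M + 1) by apply: divr_gt0 => //; lra.
  have [N hN] := hl _ ep.
  have hq := hN N (leqnn N).
  have e1 : 1 - f l = f (u N - l) by rewrite (flinB hf) Au.
  have := hM (u N - l); rewrite -e1 => h1.
  have h2 : M * Q (u N - l) <= M * (n2 (1 - f l) / (M + 1)) by apply: ler_wpM2l => //; exact: ltW.
  have M1 : 0 < M + 1 by lra.
  have h3 : n2 (1 - f l) / (M + 1) * (M + 1) = n2 (1 - f l) by rewrite mulfVK // gt_eqF.
  nra.
have [z0 [Az0 z0min]] := min_exists hip hc Ax0 Amid Acl.
have orth : forall h, f h = 0 -> ip h z0 = 0.
  move=> h fh; apply: (variational (A := A)) => // t.
  by rewrite /A (flinD hf) (flinZ hf) fh mulr0 addr0.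
have nz : Q z0 != 0.
  apply/eqP => /(Q_eq0 hip) e; move: Az0; rewrite /A e (flin0 hf) => /eqP.
  by rewrite eq_sym oner_eq0.
exists (((Q z0)^-1)%:C *: z0) => x.
have := orth (x - f x *: z0); rewrite (flinB hf) (flinZ hf) Az0 mulr1 subrr => /(_ erefl).
rewrite (ipBl hip) (ipZl hip) (ipQ hip) => /eqP; rewrite subr_eq0 => /eqP e.
rewrite (ipZr hip) cjR e mulrCA -RcM mulVf //.
by rewrite [X in _ * X]/= mulr1.
Qed.

Lemma Q_small (v : H) : (forall e : R, 0 < e -> Q v < e) -> v = 0.
Proof.
move=> h; apply: (Q_eq0 hip); apply/eqP; rewrite eq_le (Q_ge0 hip) andbT.
rewrite leNgt; apply/negP => qp; have := h _ qp; by rewrite ltxx.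
Qed.

Lemma surj_lemma (g g' : H -> H) : (forall a x y, g (a *: x + y) = a *: g x + g y) ->
  (exists M, 0 <= M /\ forall x, Q (g x) <= M * Q x) -> (forall x, Q x <= Q (g x)) ->
  (forall x y, ip (g x) y = ip x (g' y)) -> (forall y, g' y = 0 -> y = 0) ->
  forall y, exists x, g x = y.
Proof.
move=> hg [M [M0 hM]] hbelow hadj hinj y.
pose A := fun v => exists x, v = g x - y.
have Ax0 : A (g 0 - y) by exists 0.
have Amid : forall v w, A v -> A w -> A ((2%:R^-1 : C) *: (v + w)).
  move=> v w [x ->] [x' ->]; exists ((2%:R^-1 : C) *: (x + x')).
  rewrite (linZ hg) (linD hg) -[in RHS](half_twice y) -scalerBr; congr (_ *: _).
  by rewrite opprD !addrA [_ - y + _]addrAC.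
have Acl : forall u l, (forall n, A (u n)) -> convQ ip u l -> A l.
  move=> u l Au hl.
  have [xs hxs] : exists xs : nat -> H, forall n, u n = g (xs n) - y.
    exists (fun n => proj1_sig (constructive_indefinite_description _ (Au n))) => n.
    exact: proj2_sig (constructive_indefinite_description _ (Au n)).
  have [xl hxl] : exists xl, convQ ip xs xl.
    apply: (complete_Q hc) => e ep.
    have e4 : 0 < e / 4 by apply: divr_gt0.
    have [N hN] := hl _ e4.
    exists N => m n hm hn.
    apply: le_lt_trans (hbelow _) _.
    rewrite (linB hg).
    have -> : g (xs m) - g (xs n) = (u m - l) + (l - u n).
      by rewrite !hxs -zid2.
    apply: le_lt_trans (Q_add_le hip _ _) _.
    have := hN m hm; have := hN n hn.
    have -> : Q (l - u n) = Q (u n - l) by rewrite -QN ?opprB.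
    lra.
  exists xl; apply/eqP; rewrite -subr_eq0; apply/eqP; apply: Q_small => e ep.
  have M1 : 0 < 4 * (M + 1) by apply: mulr_gt0 => //; lra.
  have e4 : 0 < e / 4 by apply: divr_gt0.
  have e4M : 0 < e / (4 * (M + 1)) by apply: divr_gt0.
  have [N1 hN1] := hl _ e4.
  have [N2 hN2] := hxl _ e4M.
  have h1 := hN1 (N1 + N2)%N (leq_addr _ _).
  have h2 := hN2 (N1 + N2)%N (leq_addl _ _).
  have -> : l - (g xl - y) = (l - u (N1 + N2)%N) + g (xs (N1 + N2)%N - xl).
    by rewrite hxs (linB hg) -zid1.
  apply: le_lt_trans (Q_add_le hip _ _) _.
  have -> : Q (l - u (N1 + N2)%N) = Q (u (N1 + N2)%N - l) by rewrite -QN ?opprB.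
  have h3 := hM (xs (N1 + N2)%N - xl).
  have h4 : M * Q (xs (N1 + N2)%N - xl) <= M * (e / (4 * (M + 1))).
    by apply: ler_wpM2l => //; exact: ltW.
  have h5 : M * (e / (4 * (M + 1))) <= e / 4.
    have M1' : 0 < M + 1 by lra.
    have hM1 : M / (M + 1) <= 1 by rewrite ler_pdivrMr //; lra.
    have -> : M * (e / (4 * (M + 1))) = e / 4 * (M / (M + 1)).
      by field; rewrite gt_eqF.
    have : 0 <= M / (M + 1) by apply: divr_ge0 => //; exact: ltW.
    nra.
  lra.
have [v0 [[x0 ->] vmin]] := min_exists hip hc Ax0 Amid Acl.
exists x0; apply/eqP; rewrite -subr_eq0; apply/eqP.
apply: hinj; apply: (Q_eq0 hip).
have o : forall k, ip k (g' (g x0 - y)) = 0.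
  move=> k; rewrite -hadj; apply: (variational (A := A)) => //; first by exists x0.
  by move=> t; exists (x0 + t *: k); rewrite (linD hg) (linZ hg) addrAC.
by rewrite /Q o.
Qed.

End Riesz.

From Stdlib Require Import FunctionalExtensionality.

Lemma opinv_eq {V : Type} (f g : V -> V) : cancel f g -> cancel g f -> opinv f = g.
Proof.
move=> fg gf; rewrite /opinv.
have ex : exists S, cancel f S /\ cancel S f by exists g.
have [h1 h2] := epsilon_spec (inhabits id) _ ex.
apply: functional_extensionality => y.
set S0 := epsilon _ _ in h1 h2 *.
by rewrite -{1}(gf y) h1.
Qed.

Section AdjU.
Variable R : realType.
Local Notation C := (R[i]).
Variable V : lmodType C.
Variable ip : V -> V -> C.
Hypothesis hdef : forall x, ip x x = 0 -> x = 0.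
Hypothesis hsub : forall x y z, ip x (y - z) = ip x y - ip x z.
Lemma adj_unique (f g : V -> V) : (forall x y, ip (f x) y = ip x (g y)) -> adj ip f = g.
Proof.
move=> hfg; rewrite /adj.
have ex : exists S, forall x y, ip (f x) y = ip x (S y) by exists g.
have h := epsilon_spec (inhabits id) _ ex.
apply: functional_extensionality => y.
set S0 := epsilon _ _ in h *.
apply/eqP; rewrite -subr_eq0; apply/eqP; apply: hdef.
by rewrite hsub -h -hfg subrr.
Qed.
End AdjU.

Section KS.
Variable R : realType.
Local Notation C := (R[i]).
Variable H : lmodType C.
Variable ip : H -> H -> C.
Hypothesis hip : is_inner_product ip.
Local Notation K := (H * H)%type.
Local Notation ipK := (ipK ip).
Local Notation Q := (Q ip).

Definition QK (u : K) : R := Q u.1 + Q u.2.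

Lemma ipK_lin a (x y z : K) : ipK (a *: x + y) z = a * ipK x z + ipK y z.
Proof. by rewrite /ipK /= !(ipDl hip) !(ipZl hip); ring. Qed.
Lemma ipK_C (x y : K) : ipK y x = conjc (ipK x y).
Proof. by rewrite /ipK cjD -!(ipC hip). Qed.
Lemma ipK_Br (x y z : K) : ipK x (y - z) = ipK x y - ipK x z.
Proof. by rewrite /ipK /= !(ipBr hip); ring. Qed.
Lemma ipK_self (u : K) : ipK u u = (QK u)%:C.
Proof. by rewrite /ipK !(ipQ hip) -RcD. Qed.
Lemma ipK_def (u : K) : ipK u u = 0 -> u = 0.
Proof.
rewrite ipK_self /QK => /(congr1 (@complex.Re R)) /= e.
have h1 := Q_ge0 hip u.1; have h2 := Q_ge0 hip u.2.
have e1 : Q u.1 = 0 by lra.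
have e2 : Q u.2 = 0 by lra.
by case: u e1 e2 {e h1 h2} => u1 u2 /= /(Q_eq0 hip) -> /(Q_eq0 hip) ->.
Qed.
Lemma ipKJ (u : K) : ipK u (Jop u) = (Q u.1 - Q u.2)%:C.
Proof. by rewrite /ipK /Jop /= (ipNr hip) !(ipQ hip) RcD RcN. Qed.

Lemma adjK (f g : K -> K) : (forall x y, ipK (f x) y = ipK x (g y)) -> adj ipK f = g.
Proof. by apply: adj_unique; [exact: ipK_def | exact: ipK_Br]. Qed.
Lemma adjH (f g : H -> H) : (forall x y, ip (f x) y = ip x (g y)) -> adj ip f = g.
Proof.
apply: adj_unique; [|by move=> x y z; exact: (ipBr hip)].
by move=> x e; apply: (Q_eq0 hip); rewrite /Q e.
Qed.

End KS.

Section Good.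
Variable R : realType.
Local Notation C := (R[i]).
Variable H : lmodType C.
Variable ip : H -> H -> C.
Hypothesis hip : is_inner_product ip.
Hypothesis hc : is_complete ip.
Local Notation K := (H * H)%type.
Local Notation ipK := (ipK ip).
Local Notation Q := (Q ip).
Local Notation QK := (QK ip).

Record good (T A S : K -> K) : Prop := Good {
  g_lin : forall a x y, T (a *: x + y) = a *: T x + T y;
  g_bd : exists M, 0 <= M /\ forall x, QK (T x) <= M * QK x;
  g_adj : forall x y, ipK (T x) y = ipK x (A y);
  g_J : forall x, A (Jop (T x)) = Jop x;
  g_TS : cancel T S;
  g_ST : cancel S T;
  g_Sbd : exists M, 0 <= M /\ forall x, QK (S x) <= M * QK x }.

Lemma JJ (u : K) : Jop (Jop u) = u.
Proof. by case: u => u1 u2; rewrite /Jop /= opprK. Qed.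
Lemma J_lin a (x y : K) : Jop (a *: x + y) = a *: Jop x + Jop y.
Proof. by case: x => x1 x2; case: y => y1 y2; rewrite /Jop /=; congr (_, _); rewrite opprD -scalerN.
Qed.
Lemma QKJ (u : K) : QK (Jop u) = QK u.
Proof. by rewrite /QK /Jop /= (QN hip). Qed.

Lemma inv_lin (T S : K -> K) : (forall a x y, T (a *: x + y) = a *: T x + T y) ->
  cancel T S -> cancel S T -> forall a x y, S (a *: x + y) = a *: S x + S y.
Proof.
move=> hl TS ST a x y; apply: (can_inj TS).
by rewrite hl !ST.
Qed.

Variables T A S : K -> K.
Hypothesis hg : good T A S.

Lemma good_A w : A w = Jop (S (Jop w)).
Proof.
have -> : w = Jop (T (S (Jop w))) by rewrite (g_ST hg) JJ.
by rewrite (g_J hg) !JJ (g_TS hg).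
Qed.

Lemma good_JU p q : ipK (T p) (Jop (T q)) = ipK p (Jop q).
Proof. by rewrite (g_adj hg) (g_J hg). Qed.

Lemma good_adjA : good A T (fun x => Jop (T (Jop x))).
Proof.
have Slin := inv_lin (g_lin hg) (g_TS hg) (g_ST hg).
split.
- by move=> a x y; rewrite !good_A J_lin Slin J_lin.
- have [M [M0 hM]] := g_Sbd hg; exists M; split => // x.
  by rewrite good_A QKJ -(QKJ x); apply: hM.
- move=> x y; rewrite (ipK_C hip) -(g_adj hg) -(ipK_C hip) //.
- by move=> x; rewrite good_A !JJ (g_ST hg).
- by move=> x; rewrite good_A JJ (g_ST hg) JJ.
- by move=> x; rewrite good_A JJ (g_TS hg) JJ.
- have [M [M0 hM]] := g_bd hg; exists M; split => // x.
  by rewrite QKJ -(QKJ x); apply: hM.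
Qed.

Lemma good_inv : good S (fun x => Jop (T (Jop x))) T.
Proof.
have Slin := inv_lin (g_lin hg) (g_TS hg) (g_ST hg).
split.
- exact: Slin.
- exact: (g_Sbd hg).
- move=> x y; rewrite -[in RHS](g_ST hg x) good_JU JJ //.
- by move=> x; rewrite JJ (g_ST hg).
- exact: (g_ST hg).
- exact: (g_TS hg).
- exact: (g_bd hg).
Qed.

End Good.

Section Blocks.
Variable R : realType.
Local Notation C := (R[i]).
Variable H : lmodType C.
Variable ip : H -> H -> C.
Hypothesis hip : is_inner_product ip.
Hypothesis hc : is_complete ip.
Local Notation K := (H * H)%type.
Local Notation ipK := (ipK ip).
Local Notation Q := (Q ip).
Local Notation QK := (QK ip).

Variables T A S : K -> K.
Hypothesis hg : good ip T A S.

Lemma Tpair x1 x2 : T (x1, x2) = (blk_a T x1 + blk_b T x2, blk_c T x1 + blk_d T x2).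
Proof.
have -> : ((x1, x2) : K) = 1 *: (x1, 0) + (0, x2).
  by change (((x1, x2) : K) = (1 *: x1 + 0, 1 *: 0 + x2)); rewrite scale1r addr0 scaler0 add0r.
rewrite (g_lin hg) scale1r /blk_a /blk_b /blk_c /blk_d.
by case: (T (x1, 0)) => ? ?; case: (T (0, x2)) => ? ?.
Qed.

Lemma blk_lin1 a x y : ((a *: x + y, 0) : K) = a *: (x, 0) + (y, 0).
Proof. by change (((a *: x + y, 0) : K) = (a *: x + y, a *: 0 + 0)); rewrite scaler0 addr0. Qed.
Lemma blk_lin2 a x y : ((0, a *: x + y) : K) = a *: (0, x) + (0, y).
Proof. by change (((0, a *: x + y) : K) = (a *: 0 + 0, a *: x + y)); rewrite scaler0 addr0. Qed.

Lemma ba_lin a x y : blk_a T (a *: x + y) = a *: blk_a T x + blk_a T y.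
Proof. by rewrite /blk_a blk_lin1 (g_lin hg). Qed.
Lemma bd_lin a x y : blk_d T (a *: x + y) = a *: blk_d T x + blk_d T y.
Proof. by rewrite /blk_d blk_lin2 (g_lin hg). Qed.

Lemma bb_lin a x y : blk_b T (a *: x + y) = a *: blk_b T x + blk_b T y.
Proof. by rewrite /blk_b blk_lin2 (g_lin hg). Qed.
Lemma bc_lin a x y : blk_c T (a *: x + y) = a *: blk_c T x + blk_c T y.
Proof. by rewrite /blk_c blk_lin1 (g_lin hg). Qed.

Lemma ba_bd : exists M, 0 <= M /\ forall x, Q (blk_a T x) <= M * Q x.
Proof.
have [M [M0 hM]] := g_bd hg; exists M; split => // x.
have := hM (x, 0); rewrite /QK /= (Q0 hip) addr0 /blk_a.
have := Q_ge0 hip (T (x, 0)).2; lra.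
Qed.
Lemma bd_bd : exists M, 0 <= M /\ forall x, Q (blk_d T x) <= M * Q x.
Proof.
have [M [M0 hM]] := g_bd hg; exists M; split => // x.
have := hM (0, x); rewrite /QK /= (Q0 hip) add0r /blk_d.
have := Q_ge0 hip (T (0, x)).1; lra.
Qed.

Lemma ba_below x : Q x <= Q (blk_a T x).
Proof.
have := good_JU hg (x, 0) (x, 0); rewrite !(ipKJ hip) /= (Q0 hip) subr0.
move/(congr1 (@complex.Re R)) => /= e.
have := Q_ge0 hip (blk_c T x); rewrite /blk_a /blk_c; lra.
Qed.
Lemma bd_below x : Q x <= Q (blk_d T x).
Proof.
have := good_JU hg (0, x) (0, x); rewrite !(ipKJ hip) /= (Q0 hip) sub0r.
move/(congr1 (@complex.Re R)) => /= e.
have := Q_ge0 hip (blk_b T x); rewrite /blk_b /blk_d; lra.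
Qed.

Lemma ba_adj x y : ip (blk_a T x) y = ip x (blk_a A y).
Proof.
have := g_adj hg (x, 0) (y, 0); rewrite /ipK /= (ip0r hip) (ip0l hip) !addr0 //.
Qed.
Lemma bd_adj x y : ip (blk_d T x) y = ip x (blk_d A y).
Proof.
have := g_adj hg (0, x) (0, y); rewrite /ipK /= (ip0r hip) (ip0l hip) !add0r //.
Qed.

End Blocks.

Lemma invV_lin (R : realType) (V : lmodType R[i]) (f g : V -> V) :
  (forall a x y, f (a *: x + y) = a *: f x + f y) ->
  cancel f g -> cancel g f -> forall a x y, g (a *: x + y) = a *: g x + g y.
Proof. by move=> hl fg gf a x y; apply: (can_inj fg); rewrite hl !gf. Qed.

Section VLemma.
Variable R : realType.
Local Notation C := (R[i]).
Variable H : lmodType C.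
Variable ip : H -> H -> C.
Hypothesis hip : is_inner_product ip.
Hypothesis hc : is_complete ip.
Local Notation K := (H * H)%type.
Local Notation ipK := (ipK ip).
Local Notation Q := (Q ip).

Lemma below_inj (g : H -> H) : (forall a x y, g (a *: x + y) = a *: g x + g y) ->
  (forall x, Q x <= Q (g x)) -> injective g.
Proof.
move=> hl hb x y e; apply/eqP; rewrite -subr_eq0; apply/eqP; apply: (Q_eq0 hip).
apply/eqP; rewrite eq_le (Q_ge0 hip) andbT.
by have := hb (x - y); rewrite (linB hl) e subrr (Q0 hip).
Qed.

Lemma bij_inv (g : H -> H) : injective g -> (forall y, exists x, g x = y) ->
  exists g', cancel g g' /\ cancel g' g.
Proof.
move=> gi gs.
exists (fun y => proj1_sig (constructive_indefinite_description _ (gs y))); split.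
- move=> x; apply: gi; exact: proj2_sig (constructive_indefinite_description _ (gs (g x))).
- move=> y; exact: proj2_sig (constructive_indefinite_description _ (gs y)).
Qed.

Variables T A S : K -> K.
Hypothesis hg : good ip T A S.

Let hA := good_adjA hip hg.

Lemma d_bij : exists g', cancel (blk_d T) g' /\ cancel g' (blk_d T).
Proof.
apply: bij_inv.
  exact: below_inj (bd_lin hg) (bd_below hip hg).
apply: (surj_lemma hip hc (bd_lin hg) (bd_bd hip hg) (bd_below hip hg) (bd_adj hip hg)).
move=> y e; apply: (Q_eq0 hip); apply/eqP; rewrite eq_le (Q_ge0 hip) andbT.
by have := bd_below hip hA y; rewrite e (Q0 hip).
Qed.

Lemma as_bij : exists g', cancel (blk_a A) g' /\ cancel g' (blk_a A).
Proof.
apply: bij_inv.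
  exact: below_inj (ba_lin hA) (ba_below hip hA).
apply: (surj_lemma hip hc (ba_lin hA) (ba_bd hip hA) (ba_below hip hA) (ba_adj hip hA)).
move=> y e; apply: (Q_eq0 hip); apply/eqP; rewrite eq_le (Q_ge0 hip) andbT.
by have := ba_below hip hg y; rewrite e (Q0 hip).
Qed.

Lemma Rel x : Vop ip T (x.1, (T x).2) = ((T x).1, x.2).
Proof.
have [di [dl dr]] := d_bij.
have [ai [al ar]] := as_bij.
have dil := invV_lin (bd_lin hg) dl dr.
rewrite /Vop (adjH hip (ba_adj hip hg)) (opinv_eq al ar) (opinv_eq dl dr).
case: x => x1 x2 /=; rewrite (Tpair hg) /=.
set w := di (blk_c T x1).
have hdi : di (blk_c T x1 + blk_d T x2) = w + x2 by rewrite (linD dil) dl.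
rewrite hdi.
pose u : K := (x1, - w).
have Tu2 : (T u).2 = 0.
  by rewrite /u (Tpair hg) /= (linN (bd_lin hg)) /w dr subrr.
have Tu1 : (T u).1 = blk_a T x1 - blk_b T w.
  by rewrite /u (Tpair hg) /= (linN (bb_lin hg)).
have hAp : blk_a A (T u).1 = x1.
  have := g_J hg u; rewrite /Jop.
  have -> : T u = ((T u).1, (T u).2) by case: (T u).
  by rewrite Tu2 oppr0 /blk_a => ->.
rewrite -{1}hAp al Tu1 (linD (bb_lin hg)); congr (_, _).
  by rewrite addrA subrK.
by rewrite addKr.
Qed.

Lemma Rsurj p q : exists x : K, x.1 = p /\ (T x).2 = q.
Proof.
have [di [dl dr]] := d_bij.
exists (p, di (q - blk_c T p)); split => //.
by rewrite (Tpair hg) /= dr addrC subrK.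
Qed.

Lemma Viso u v : ipK (Vop ip T u) (Vop ip T v) = ipK u v.
Proof.
have [x [x1 x2]] := Rsurj u.1 u.2.
have [y [y1 y2]] := Rsurj v.1 v.2.
have -> : u = (x.1, (T x).2) by case: u x1 x2 => ? ? /= -> ->.
have -> : v = (y.1, (T y).2) by case: v y1 y2 => ? ? /= -> ->.
rewrite !Rel.
have := good_JU hg x y; rewrite /ipK /Jop /= !(ipNr hip) => e.
apply/eqP; rewrite -subr_eq0; apply/eqP.
have -> : ip (T x).1 (T y).1 + ip x.2 y.2 - (ip x.1 y.1 + ip (T x).2 (T y).2) =
  (ip (T x).1 (T y).1 + - ip (T x).2 (T y).2) - (ip x.1 y.1 + - ip x.2 y.2) by ring.
by rewrite e subrr.
Qed.

End VLemma.

Section Main.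
Variable R : realType.
Local Notation C := (R[i]).
Variable H : lmodType C.
Variable ip : H -> H -> C.
Hypothesis hip : is_inner_product ip.
Hypothesis hc : is_complete ip.
Local Notation K := (H * H)%type.

Lemma VV (T A S : K -> K) (hg : good ip T A S) w : Vop ip T (Vop ip S w) = w.
Proof.
have hS := good_inv hg.
case: w => p q.
have [y [y1 y2]] := Rsurj hip hc hS p q.
have -> : ((p, q) : K) = (y.1, (S y).2) by rewrite y1 y2.
rewrite (Rel hip hc hS y).
have := Rel hip hc hg (S y); rewrite (g_ST hg) => ->.
by rewrite y1 y2.
Qed.

Lemma main3 (T A S : K -> K) (hg : good ip T A S) :
  [/\ opinv (Vop ip T) = adj (ipK ip) (Vop ip T),
      adj (ipK ip) (Vop ip T) = Vop ip S &
      Vop ip S = Jop \o Vop ip A \o Jop].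
Proof.
have hS := good_inv hg.
have hA := good_adjA hip hg.
have e2 : adj (ipK ip) (Vop ip T) = Vop ip S.
  apply: (adjK hip) => u w.
  by rewrite -{1}(VV hg w) (Viso hip hc hg).
split => //.
  by rewrite e2; apply: opinv_eq; [exact: (VV hS) | exact: (VV hg)].
apply: functional_extensionality => w /=.
case: w => p q.
have [y [y1 y2]] := Rsurj hip hc hS p q.
have -> : ((p, q) : K) = (y.1, (S y).2) by rewrite y1 y2.
rewrite (Rel hip hc hS y).
pose x := Jop y.
have Ax : A x = Jop (S y) by rewrite /x (good_A hg) JJ.
have -> : Jop (y.1, (S y).2) = (x.1, (A x).2) by rewrite Ax.
rewrite (Rel hip hc hA x) Ax /x /Jop /= opprK //.
Qed.

End Main.

Section Final.
Variable R : realType.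
Local Notation C := (R[i]).
Variable H : lmodType C.
Variable ip : H -> H -> C.
Hypothesis hip : is_inner_product ip.
Hypothesis hc : is_complete ip.
Local Notation K := (H * H)%type.
Local Notation QK := (QK ip).

Lemma hnormK (u : K) : hnorm (ipK ip) u = Num.sqrt (QK u).
Proof. by rewrite /hnorm (ipK_self hip). Qed.

Lemma bd_conv (T : K -> K) : (exists M, forall x, hnorm (ipK ip) (T x) <= M * hnorm (ipK ip) x) ->
  exists M, 0 <= M /\ forall x, QK (T x) <= M * QK x.
Proof.
move=> [M hM]; exists (M ^+ 2); split; first exact: sqr_ge0.
move=> x; have := hM x; rewrite !hnormK.
have q1 : 0 <= QK (T x) by apply: addr_ge0; exact: Q_ge0.
have q2 : 0 <= QK x by apply: addr_ge0; exact: Q_ge0.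
rewrite -{2}(sqr_sqrtr q1) -{2}(sqr_sqrtr q2).
have := sqrtr_ge0 (QK (T x)); have := sqrtr_ge0 (QK x).
set a := Num.sqrt (QK (T x)); set b := Num.sqrt (QK x) => hb ha hab.
have h1 : 0 <= M * b - a by lra.
have h2 : 0 <= M * b + a by lra.
have := mulr_ge0 h1 h2.
have -> : (M * b - a) * (M * b + a) = M ^+ 2 * b ^+ 2 - a ^+ 2 by ring.
lra.
Qed.

Lemma adj_exists (T : K -> K) : (forall a x y, T (a *: x + y) = a *: T x + T y) ->
  (exists M, 0 <= M /\ forall x, QK (T x) <= M * QK x) ->
  exists Ts, forall x y, ipK ip (T x) y = ipK ip x (Ts y).
Proof.
move=> Tlin [M [M0 hM]].
have fb : forall (u y : K), n2 (ipK ip u y) <= 2 * QK y * QK u.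
  move=> u y; rewrite /ipK; apply: le_trans (n2D _ _) _.
  have := CS hip y.1 u.1; have := CS hip y.2 u.2.
  have := Q_ge0 hip u.1; have := Q_ge0 hip u.2; have := Q_ge0 hip y.1; have := Q_ge0 hip y.2.
  rewrite /QK; nra.
have ex1 : forall y : K, exists z, forall h, ipK ip (T (h, 0)) y = ip h z.
  move=> y; apply: (riesz hip hc).
    by move=> a x x'; rewrite blk_lin1 Tlin (ipK_lin hip).
  exists (2 * QK y * M); split.
    by apply: mulr_ge0 => //; apply: mulr_ge0 => //; apply: addr_ge0; exact: Q_ge0.
  move=> h; apply: le_trans (fb _ _) _.
  have := hM (h, 0); rewrite /QK /= (Q0 hip) addr0 => e.
  have q : 0 <= 2 * QK y by apply: mulr_ge0 => //; apply: addr_ge0; exact: Q_ge0.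
  rewrite /QK in e q *; nra.
have ex2 : forall y : K, exists z, forall h, ipK ip (T (0, h)) y = ip h z.
  move=> y; apply: (riesz hip hc).
    by move=> a x x'; rewrite blk_lin2 Tlin (ipK_lin hip).
  exists (2 * QK y * M); split.
    by apply: mulr_ge0 => //; apply: mulr_ge0 => //; apply: addr_ge0; exact: Q_ge0.
  move=> h; apply: le_trans (fb _ _) _.
  have := hM (0, h); rewrite /QK /= (Q0 hip) add0r => e.
  have q : 0 <= 2 * QK y by apply: mulr_ge0 => //; apply: addr_ge0; exact: Q_ge0.
  rewrite /QK in e q *; nra.
exists (fun y => (proj1_sig (constructive_indefinite_description _ (ex1 y)),
                  proj1_sig (constructive_indefinite_description _ (ex2 y)))).
move=> [x1 x2] y.
have -> : ((x1, x2) : K) = 1 *: (x1, 0) + (0, x2).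
  by change (((x1, x2) : K) = (1 *: x1 + 0, 1 *: 0 + x2)); rewrite scale1r addr0 scaler0 add0r.
rewrite Tlin (ipK_lin hip) mul1r.
rewrite (proj2_sig (constructive_indefinite_description _ (ex1 y))).
rewrite (proj2_sig (constructive_indefinite_description _ (ex2 y))).
by rewrite /ipK /= scale1r scaler0 addr0 add0r.
Qed.

End Final.

Local Close Scope complex_scope.

Theorem proposition3p18 (R : realType) (H : lmodType R[i]) (ip : H -> H -> R[i])
  (hH : is_sep_hilbert ip)
  (T : (H * H)%type -> (H * H)%type) (hT : J_unitary ip T) :
  [/\ opinv (Vop ip T) = adj (ipK ip) (Vop ip T),
      adj (ipK ip) (Vop ip T) = Vop ip (opinv T) &
      Vop ip (opinv T) = Jop \o Vop ip (adj (ipK ip) T) \o Jop].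
Proof.
case: hH => hip hc _.
case: hT => [[[Tlin Tbd] [S [[Slin Sbd] TS ST]]] hJ].
have Tbd' := bd_conv hip Tbd.
have Sbd' := bd_conv hip Sbd.
have [Ts hTs] := adj_exists hip hc Tlin Tbd'.
have hadj : forall x y, ipK ip (T x) y = ipK ip x (adj (ipK ip) T y).
  rewrite /adj.
  have ex : exists S0, forall x y, ipK ip (T x) y = ipK ip x (S0 y) by exists Ts.
  exact: (epsilon_spec (inhabits id) _ ex).
have hg : good ip T (adj (ipK ip) T) S.
  split => //.
  - by move=> x; have := congr1 (fun f => f x) hJ.
rewrite (opinv_eq TS ST).
have [e1 e2 e3] := main3 hip hc hg.
split.
- exact: e1.
- exact: e2.
- exact: e3.
Qed.
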